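(* Let $G$ be a directed graph and $D$ a demand. Suppose there exists a $2h$-length moving cut $C$ with $2h$-length sparsity $\phi=\mathrm{spars}_{2h}(C,D)$. Then any flow routing $D$ in $G$ all of whose flow paths have length at most $h$ has congestion at least $\frac{1}{2\phi}$.
   Context: $G=(V,E)$ is a finite directed graph with positive integer edge lengths $\ell(e)$ and capacities $u(e)$. A demand is $D:V\times V\to\mathbb{R}_{\ge0}$. For $H>0$, an $H$-length moving cut is $C:E\to\{0,\tfrac1H,\dots\}\cap[0,1]$, with size $|C|=\sum_eu(e)C(e)$; $G-C$ is $G$ with lengths $\ell(e)+H\cdot C(e)$. $\mathrm{sep}_{h'}(C,D)=\sum_{(u,v):\mathrm{dist}_{G-C}(u,v)>h'}D(u,v)$ and (when positive) $\mathrm{spars}_{h'}(C,D)=|C|/\mathrm{sep}_{h'}(C,D)$. A flow assigns nonnegative values to simple directed paths; it routes $D$ if for each ordered pair $(v,w)$ the total value on $v\to w$ paths equals $D(v,w)$; its congestion is $\max_e(\text{flow through }e)/u(e)$. *)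

(* Defs.v *)
From HB Require Import structures.
From mathcomp Require Import all_boot all_order all_algebra.
From mathcomp Require Import boolp classical_sets reals constructive_ereal ereal.
Set Implicit Arguments. Unset Strict Implicit. Unset Printing Implicit Defensive.
Import Order.TTheory GRing.Theory Num.Theory.
Local Open Scope ring_scope.
Local Open Scope classical_set_scope.

Section Graph.
Variables (V E : finType) (src dst : E -> V).

Fixpoint walkb (x : V) (p : seq E) (y : V) : bool :=
  match p with
  | [::] => x == y
  | e :: p' => (src e == x) && walkb (dst e) p' y
  end.

(* A path is given by its start vertex and its edge sequence (so the trivial
   path at v is (v, [::])). *)
Definition pstart (q : V * seq E) : V := q.1.
Definition pend (q : V * seq E) : V := last q.1 (map dst q.2).

Definition simple_path (q : V * seq E) : bool :=
  walkb q.1 q.2 (pend q) && uniq (q.1 :: map dst q.2).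

Variable R : realType.

Definition wlen (len : E -> R) (p : seq E) : R := \sum_(e <- p) len e.

(* dist_len(x, y) = inf over directed walks from x to y (+oo if none). *)
Definition dist (len : E -> R) (x y : V) : \bar R :=
  ereal_inf [set (wlen len p)%:E | p in [set p | walkb x p y]].

Definition moving_cut (H : R) (C : E -> R) : Prop :=
  forall e, (exists k : nat, C e = k%:R / H) /\ 0 <= C e <= 1.

Definition cut_size (u : E -> nat) (C : E -> R) : R := \sum_e (u e)%:R * C e.

Definition len_minus_cut (l : E -> nat) (H : R) (C : E -> R) : E -> R :=
  fun e => (l e)%:R + H * C e.

Definition sep (l : E -> nat) (H : R) (C : E -> R) (h' : R) (D : V -> V -> R) : R :=
  \sum_(x : V) \sum_(y : V | (h'%:E < dist (len_minus_cut l H C) x y)%E) D x y.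

(* spars_{h'}(C, D) = |C| / sep_{h'}(C, D)  (used only when sep > 0) *)
Definition spars (l u : E -> nat) (H : R) (C : E -> R) (h' : R) (D : V -> V -> R) : R :=
  cut_size u C / sep l H C h' D.

Definition is_flow (S : seq (V * seq E)) (f : V * seq E -> R) : Prop :=
  [/\ uniq S,
      forall q, q \notin S -> f q = 0
    & forall q, q \in S -> simple_path q /\ 0 <= f q].

Definition routes (S : seq (V * seq E)) (f : V * seq E -> R) (D : V -> V -> R) : Prop :=
  forall v w, \sum_(q <- S | (pstart q == v) && (pend q == w)) f q = D v w.

Definition edge_load (S : seq (V * seq E)) (f : V * seq E -> R) (e : E) : R :=
  \sum_(q <- S | e \in q.2) f q.

Definition congestion (u : E -> nat) (S : seq (V * seq E)) (f : V * seq E -> R) : R :=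
  \big[Order.max/0]_(e : E) (edge_load S f e / (u e)%:R).

End Graph.

(* Main.v *)
Require Import Defs.
From HB Require Import structures.
From mathcomp Require Import all_boot all_order all_algebra.
From mathcomp Require Import boolp classical_sets reals constructive_ereal ereal.
From mathcomp Require Import lra ring.
Import Order.TTheory GRing.Theory Num.Theory.
Local Open Scope ring_scope.

Theorem theoremA3 (R : realType) (V E : finType) (src dst : E -> V)
  (l u : E -> nat) (D : V -> V -> R) (h : R) (C : E -> R) (phi : R)
  (S : seq (V * seq E)) (f : V * seq E -> R) :
  (forall e, (0 < l e)%N) -> (forall e, (0 < u e)%N) ->
  (forall x y, 0 <= D x y) ->
  0 < h ->
  moving_cut (2 * h) C ->
  0 < sep src dst l (2 * h) C (2 * h) D ->
  phi = spars src dst l u (2 * h) C (2 * h) D ->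
  is_flow src dst S f ->
  routes dst S f D ->
  (forall q, 0 < f q -> wlen (fun e => (l e)%:R) q.2 <= h) ->
  1 / (2 * phi) <= congestion u S f.
Proof.
have eqRL : forall (a b : R), a = b -> a <= b by move=> a b ->.
move=> lpos upos Dpos hpos mc seppos -> [Suniq Sout Sin] rt hlen.
have C0 e : 0 <= C e by case: (mc e) => _ /andP[].
set Csum := fun q : V * seq E => \sum_(e <- q.2) C e.
have Cs0 q : 0 <= Csum q by apply: sumr_ge0 => e _.
have g0 q : q \in S -> 0 <= f q * Csum q.
  by move=> qS; apply: mulr_ge0 => //; case: (Sin q qS).
set cond := fun x y => ((2 * h)%:E < dist src dst (len_minus_cut l (2 * h) C) x y)%E.
have key q x y : q \in S -> cond x y -> pstart q == x -> pend dst q == y ->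
    f q / 2 <= f q * Csum q.
  move=> qS cxy /eqP sx /eqP ey.
  have [sp fq0] := Sin q qS.
  have [fq| ] := ltrP 0 (f q); last first.
    move=> fle; have -> : f q = 0 by apply/le_anti; rewrite fle fq0.
    by rewrite !mul0r.
  have hl := hlen q fq.
  have wk : walkb src dst x q.2 y.
    by move: sp => /andP[w _]; rewrite -sx -ey.
  have : (dist src dst (len_minus_cut l (2 * h) C) x y <=
          (wlen (len_minus_cut l (2 * h) C) q.2)%:E)%E.
    by apply: ereal_inf_lbound; exists q.2.
  move=> dle; have := lt_le_trans cxy dle; rewrite lte_fin => lt2.
  have eqw : wlen (len_minus_cut l (2 * h) C) q.2 =
     wlen (fun e => (l e)%:R) q.2 + 2 * h * Csum q.
    by rewrite /wlen /len_minus_cut big_split /= mulr_sumr.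
  rewrite eqw in lt2.
  have : 1 / 2 <= Csum q.
    have : h < 2 * h * Csum q by lra.
    move=> H; rewrite ler_pdivrMr //.
    have : h * 1 <= h * (Csum q * 2) by rewrite mulr1; lra.
    by rewrite ler_pM2l.
  move=> H; nra.
set cg := congestion u S f.
have cg0 : 0 <= cg by apply: bigmax_ge_id.
have step2 : sep src dst l (2 * h) C (2 * h) D / 2 <= \sum_(q <- S) f q * Csum q.
  rewrite /sep mulr_suml.
  apply: (@le_trans _ _ (\sum_x \sum_y \sum_(q <- S)
     (if (pstart q == x) && (pend dst q == y) then f q * Csum q else 0))).
    apply: ler_sum => x _; rewrite mulr_suml [X in _ <= X](bigID (fun y => cond x y)) /=.
    rewrite -[X in X <= _]addr0; apply: lerD.
      apply: ler_sum => y cxy; rewrite -(rt x y) mulr_suml big_seq_cond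
        [X in _ <= X]big_seq !big_mkcond /=.
      rewrite [X in _ <= X]big_mkcond /=.
      apply: ler_sum => q _; case qS: (q \in S) => //=; case: ifP => [/andP[a b]|_ //].
      exact: (key q x y qS cxy a b).
    apply: sumr_ge0 => y _; rewrite big_seq; apply: sumr_ge0 => q qS.
    by case: ifP => // _; exact: g0.
  under eq_bigr => x _ do rewrite exchange_big.
  rewrite exchange_big /=; apply/eqRL/eq_bigr => q _.
  rewrite (bigD1 (pstart q)) //= [X in _ + X]big1 ?addr0; last first.
    move=> x /negbTE nx; apply: big1 => y _; by rewrite eq_sym nx.
  rewrite (bigD1 (pend dst q)) //= [X in _ + X]big1 ?addr0 ?eqxx //.
  by move=> y /negbTE ny; rewrite eq_sym ny andbF.
have step3 : \sum_(q <- S) f q * Csum q = \sum_e C e * edge_load S f e.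
  rewrite /edge_load.
  under [RHS]eq_bigr => e _ do rewrite mulr_sumr big_mkcond.
  rewrite [RHS]exchange_big /=; apply: eq_bigr => q _.
  case qS: (q \in S); last by rewrite Sout ?qS // mul0r big1 // => e _; case: ifP; rewrite ?mulr0.
  have [sp _] := Sin q qS.
  have uq : uniq q.2 by move: sp => /andP[_ /= /andP[_ /map_uniq]].
  rewrite /Csum big_uniq // big_mkcond mulr_sumr; apply: eq_bigr => e _.
  by case: ifP => _; rewrite ?mulr0 // mulrC.
have step4 : \sum_e C e * edge_load S f e <= cut_size u C * cg.
  rewrite /cut_size mulr_suml; apply: ler_sum => e _.
  have ue : 0 < (u e)%:R :> R by rewrite ltr0n.
  have : edge_load S f e / (u e)%:R <= cg by apply: (le_bigmax _ (fun e => edge_load S f e / (u e)%:R) e).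
  rewrite ler_pdivrMr // => H; have := C0 e; nra.
have main : sep src dst l (2 * h) C (2 * h) D / 2 <= cut_size u C * cg.
  by rewrite (le_trans step2) // step3.
have c0 : 0 <= cut_size u C.
  by apply: sumr_ge0 => e _; apply: mulr_ge0.
rewrite /spars.
move: main seppos c0; set s := sep _ _ _ _ _ _ _; set c := cut_size u C => main sp.
rewrite le_eqVlt => /orP[/eqP <-|cp].
  by rewrite mul0r mulr0 invr0 mulr0.
have -> : 1 / (2 * (c / s)) = s / (2 * c).
  by field; rewrite ?gt_eqF.
rewrite ler_pdivrMr; last by rewrite mulr_gt0.
nra.
Qed.
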